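(* Let $A=A_1A_2A_3$ and $B=B_1B_2B_3$ be triangles in the real projective plane that are perspective from a line $s$: for each permutation $(i,j,k)$ of $(1,2,3)$ the point $L_i=A_kA_j\cap B_kB_j$ lies on $s$. For each permutation $(i,j,k)$ of $(1,2,3)$ let $C_k=A_iB_j\cap A_jB_i$ (assuming general position so that these points are well defined). Then the triangle $C=C_1C_2C_3$ is perspective from the line $s$ to both $A$ and $B$; i.e., for each permutation $(i,j,k)$ the lines $C_iC_j$, $A_iA_j$, $B_iB_j$ all pass through the point $L_k\in s$.
   Context: Two configurations with a correspondence between their lines are perspective from a line $\ell$ if all intersection points of corresponding lines lie on $\ell$; for triangles the correspondence is $A_iA_j\leftrightarrow B_iB_j\leftrightarrow C_iC_j$. *)

(* Defs.v *)
(* The real projective plane RP^2 in homogeneous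
   coordinates: points and lines are nonzero row vectors of R^3
   (R : realType), a vector and its nonzero multiples denoting the same
   object; incidence is the vanishing of the dot product. *)
From mathcomp Require Import all_boot all_order all_algebra.
From mathcomp Require Import reals.
Set Implicit Arguments. Unset Strict Implicit. Unset Printing Implicit Defensive.
Import Order.TTheory GRing.Theory Num.Theory.
Local Open Scope ring_scope.

Section Proj.
Variable R : realType.
Implicit Types u v P Q X l m : 'rV[R]_3.

Definition c0 : 'I_3 := @Ordinal 3 0 isT.
Definition c1 : 'I_3 := @Ordinal 3 1 isT.
Definition c2 : 'I_3 := @Ordinal 3 2 isT.

Definition cross u v : 'rV[R]_3 :=
  \row_(k < 3)
    (if k == c0 then u 0 c1 * v 0 c2 - u 0 c2 * v 0 c1
     else if k == c1 then u 0 c2 * v 0 c0 - u 0 c0 * v 0 c2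
     else u 0 c0 * v 0 c1 - u 0 c1 * v 0 c0).

Definition dot u v : R := \sum_(k < 3) u 0 k * v 0 k.

Definition incident X l : Prop := dot X l = 0.

Definition proj_eq P Q : Prop := P != 0 /\ Q != 0 /\ cross P Q = 0.

Definition proj_distinct P Q : Prop := P != 0 /\ Q != 0 /\ cross P Q != 0.

Definition join P Q := cross P Q.
Definition meet l m := cross l m.

Definition collinear P Q X : Prop := dot X (cross P Q) = 0.

Definition triangle (A : 'I_3 -> 'rV[R]_3) : Prop :=
  [/\ forall i, A i != 0 & ~ collinear (A c0) (A c1) (A c2)].

End Proj.

(* Main.v *)
Require Import Defs.
From mathcomp Require Import all_boot all_order all_algebra.
From mathcomp Require Import reals.
From mathcomp Require Import ring lra.
Import Order.TTheory GRing.Theory Num.Theory.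
Local Open Scope ring_scope.

Lemma crossE (R : realType) (u v : 'rV[R]_3) : cross u v =
  \row_(k < 3) (if k == c0 then u 0 c1 * v 0 c2 - u 0 c2 * v 0 c1
     else if k == c1 then u 0 c2 * v 0 c0 - u 0 c0 * v 0 c2
     else u 0 c0 * v 0 c1 - u 0 c1 * v 0 c0).
Proof. by []. Qed.

Lemma dotE (R : realType) (u v : 'rV[R]_3) :
  dot u v = u 0 c0 * v 0 c0 + u 0 c1 * v 0 c1 + u 0 c2 * v 0 c2.
Proof.
rewrite /dot !big_ord_recl big_ord0 addr0 addrA.
by congr (_ + _ + _); congr (u 0 _ * v 0 _); apply: val_inj.
Qed.

Lemma ordE (x : 'I_3) : x = c0 \/ x = c1 \/ x = c2.
Proof.
case: x => [[|[|[|n]]] Hn].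
- by left; apply: val_inj.
- by right; left; apply: val_inj.
- by right; right; apply: val_inj.
- by [].
Qed.

Lemma nz_comp (R : realType) (m : 'rV[R]_3) : m != 0 -> exists t, m 0 t != 0.
Proof.
move=> Hm; case: (pickP (fun t => m 0 t != 0)) => [t Ht|H]; first by exists t.
move: Hm; rewrite (_ : m = 0) ?eqxx //; apply/rowP => t; rewrite !mxE.
by move/negbFE/eqP: (H t).
Qed.

Lemma id1 (R : realType) (a1 a2 a3 b1 b2 b3 : 'rV[R]_3) :
  dot (cross (cross a1 a2) (cross b1 b2))
      (cross (cross (cross a2 b3) (cross a3 b2)) (cross (cross a3 b1) (cross a1 b3)))
  = dot (cross a3 b3) (cross (cross a1 b1) (cross a2 b2)) *
    (dot a3 (cross a1 a2) * dot b3 (cross b1 b2)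
     - dot b1 (cross a1 a2) * dot b3 (cross a3 b2)
     + dot b2 (cross a1 a2) * dot b3 (cross a3 b1)).
Proof. rewrite !dotE !crossE !mxE /=. ring. Qed.

Lemma id2 (R : realType) (a1 a2 a3 b1 b2 b3 : 'rV[R]_3) :
  dot (cross (cross a1 a2) (cross b1 b2))
      (cross (cross (cross a2 a3) (cross b2 b3)) (cross (cross a3 a1) (cross b3 b1)))
  = dot a3 (cross a1 a2) * dot b3 (cross b1 b2) *
    dot (cross a3 b3) (cross (cross a1 b1) (cross a2 b2)).
Proof. rewrite !dotE !crossE !mxE /=. ring. Qed.

Lemma det0 (R : realType) (l1 l2 l3 s : 'rV[R]_3) :
  s != 0 -> dot l1 s = 0 -> dot l2 s = 0 -> dot l3 s = 0 ->
  dot l3 (cross l1 l2) = 0.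
Proof.
move=> /nz_comp [t Ht] h1 h2 h3.
have key : dot l3 (cross l1 l2) * s 0 t =
  dot l1 s * cross l2 l3 0 t + dot l2 s * cross l3 l1 0 t
  + dot l3 s * cross l1 l2 0 t.
  move: h1 h2 h3 => _ _ _.
  by case: (ordE t) => [->|[->|->]]; rewrite !dotE !crossE !mxE /=; ring.
move: key; rewrite h1 h2 h3 !mul0r !addr0 => /eqP.
by rewrite mulf_eq0 (negbTE Ht) orbF => /eqP.
Qed.

Lemma propor (R : realType) (c m : 'rV[R]_3) : m != 0 -> cross c m = 0 ->
  exists t, m 0 t != 0 /\ m 0 t *: c = c 0 t *: m.
Proof.
move=> /nz_comp [t Ht] H; exists t; split => //.
have e0 := congr1 (fun v : 'rV[R]_3 => v 0 c0) H.
have e1 := congr1 (fun v : 'rV[R]_3 => v 0 c1) H.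
have e2 := congr1 (fun v : 'rV[R]_3 => v 0 c2) H.
move: e0 e1 e2; rewrite !mxE /= => e0 e1 e2.
apply/rowP => a; rewrite !mxE.
case: (ordE t) => [->|[->|->]]; case: (ordE a) => [->|[->|->]]; lra.
Qed.

Lemma scale_lin (R : realType) (L c1 c2 : 'rV[R]_3) (x y : R) :
  dot L (cross (x *: c1) (y *: c2)) = x * y * dot L (cross c1 c2).
Proof. rewrite !dotE !crossE !mxE /=. ring. Qed.

Lemma core (R : realType) (a1 a2 a3 b1 b2 b3 s c1 c2 : 'rV[R]_3) :
  dot a3 (cross a1 a2) != 0 -> dot b3 (cross b1 b2) != 0 -> s != 0 ->
  incident (meet (join a1 a2) (join b1 b2)) s ->
  incident (meet (join a2 a3) (join b2 b3)) s ->
  incident (meet (join a3 a1) (join b3 b1)) s ->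
  proj_eq c1 (meet (join a2 b3) (join a3 b2)) ->
  proj_eq c2 (meet (join a3 b1) (join a1 b3)) ->
  collinear c1 c2 (meet (join a1 a2) (join b1 b2)).
Proof.
rewrite /incident /proj_eq /collinear /meet /join.
move=> dA dB s0 i1 i2 i3 [_ [m1 p1]] [_ [m2 p2]].
have := @det0 R _ _ _ _ s0 i2 i3 i1; rewrite id2 => /eqP.
rewrite mulf_eq0 (negbTE (mulf_neq0 dA dB)) /= => /eqP conc.
have M0 := @id1 R a1 a2 a3 b1 b2 b3; rewrite conc mul0r in M0.
have [t [Ht E1]] := @propor R _ _ m1 p1.
have [u [Hu E2]] := @propor R _ _ m2 p2.
have : cross (cross a2 b3) (cross a3 b2) 0 t * cross (cross a3 b1) (cross a1 b3) 0 u * dot (cross (cross a1 a2) (cross b1 b2)) (cross c1 c2) = 0.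
  by rewrite -scale_lin E1 E2 scale_lin M0 mulr0.
move/eqP; rewrite mulf_eq0 (negbTE (mulf_neq0 Ht Hu)) /=; exact/eqP.
Qed.

Lemma dcl (R : realType) (u v : 'rV[R]_3) : dot (cross u v) u = 0.
Proof. rewrite !dotE !crossE !mxE /=. ring. Qed.
Lemma dcr (R : realType) (u v : 'rV[R]_3) : dot (cross u v) v = 0.
Proof. rewrite !dotE !crossE !mxE /=. ring. Qed.

Lemma third (i j : 'I_3) : i != j -> exists k, i != k /\ j != k /\ k != i /\ k != j.
Proof.
case: (ordE i) => [->|[->|->]]; case: (ordE j) => [->|[->|->]] //= _;
  [exists c2|exists c1|exists c2|exists c0|exists c1|exists c0]; by [].
Qed.

Lemma detperm (R : realType) (A : 'I_3 -> 'rV[R]_3) i j k :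
  i != j -> j != k -> i != k ->
  dot (A c2) (cross (A c0) (A c1)) != 0 -> dot (A k) (cross (A i) (A j)) != 0.
Proof.
case: (ordE i) => [->|[->|->]]; case: (ordE j) => [->|[->|->]];
  case: (ordE k) => [->|[->|->]] => //= _ _ _;
  rewrite !dotE !crossE !mxE /=; apply: contra => /eqP H; apply/eqP; lra.
Qed.

Theorem theorem4 (R : realType) (A B C : 'I_3 -> 'rV[R]_3) (s : 'rV[R]_3) :
  triangle A -> triangle B -> s != 0 ->
  (* general position: corresponding sides are distinct lines *)
  (forall i j : 'I_3, i != j ->
     proj_distinct (join (A i) (A j)) (join (B i) (B j))) ->
  (* A and B are perspective from the line s: L_k = A_iA_j /\ B_iB_j lies on s *)
  (forall i j : 'I_3, i != j ->
     incident (meet (join (A i) (A j)) (join (B i) (B j))) s) ->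
  (* general position: C_k = A_iB_j /\ A_jB_i is well defined *)
  (forall i j : 'I_3, i != j ->
     proj_distinct (A i) (B j) /\
     proj_distinct (join (A i) (B j)) (join (A j) (B i))) ->
  (* C_k is the point A_iB_j /\ A_jB_i for every permutation (i,j,k) *)
  (forall i j k : 'I_3, i != j -> j != k -> i != k ->
     proj_eq (C k) (meet (join (A i) (B j)) (join (A j) (B i)))) ->
  (* conclusion: C_iC_j, A_iA_j, B_iB_j all pass through L_k (which is on s) *)
  forall i j : 'I_3, i != j ->
    let L := meet (join (A i) (A j)) (join (B i) (B j)) in
    [/\ collinear (C i) (C j) L, incident L (join (A i) (A j)),
        incident L (join (B i) (B j)) & incident L s].
Proof.
move=> [_ tA] [_ tB] s0 Hd Hinc Hgp HC i j ij L.
have [k [ik [jk [ki kj]]]] := third i j ij.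
have ji : j != i by rewrite eq_sym.
have dA : dot (A c2) (cross (A c0) (A c1)) != 0 by apply/eqP.
have dB : dot (B c2) (cross (B c0) (B c1)) != 0 by apply/eqP.
split.
- apply: core.
  + exact: (@detperm R A i j k ij jk ik dA).
  + exact: (@detperm R B i j k ij jk ik dB).
  + exact: s0.
  + exact: Hinc i j ij.
  + exact: Hinc j k jk.
  + exact: Hinc k i ki.
  + exact: HC j k i jk ki ji.
  + exact: HC k i j ki ij kj.
- by rewrite /incident /L /meet /join dcl.
- by rewrite /incident /L /meet /join dcr.
- exact: Hinc i j ij.
Qed.
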